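(* Fix integers $k \ge 3$ and $i \in \{2,\dots,k-1\}$, and let $T = \{1,\dots,k\}\setminus\{i\}$. Let $d \ge 1$ and $x \in \mathbb{Z}_k^d$. Then $\mathbb{Z}_k^d \setminus \{x\}$ is a disjoint union of copies of $T$ in $\mathbb{Z}_k^d$.
   Context: $\mathbb{Z}_k$ denotes the integers modulo $k$. A copy of $T$ in $\mathbb{Z}_k^d$ is a set of the form $\{x + j e_s : j \in \mathbb{Z}_k,\ j \ne j_0\}$ for some $x \in \mathbb{Z}_k^d$, $s \in \{1,\dots,d\}$ ($e_s$ the $s$-th unit vector) and $j_0 \in \mathbb{Z}_k$, i.e. a coordinate line with one point removed. *)

(* Defs.v *)
From HB Require Import structures.
From mathcomp Require Import all_boot all_order all_algebra.
Set Implicit Arguments. Unset Strict Implicit. Unset Printing Implicit Defensive.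
Import GRing.Theory.
Local Open Scope ring_scope.

(* Points of Z_k^d: functions from coordinates 'I_d to 'Z_k.
   ('Z_k is Z/kZ for k >= 2; the theorem assumes k >= 3.) *)
Definition point (k d : nat) := {ffun 'I_d -> 'Z_k}.

Definition shift_along (k d : nat) (x : point k d) (s : 'I_d) (j : 'Z_k)
  : point k d :=
  [ffun t => x t + (if t == s then j else 0)].

Definition copy_of_T (k d : nat) (x : point k d) (s : 'I_d) (j0 : 'Z_k)
  : {set point k d} :=
  [set shift_along x s j | j : 'Z_k & j != j0].

Definition is_copy_of_T (k d : nat) (C : {set point k d}) : Prop :=
  exists (x : point k d) (s : 'I_d) (j0 : 'Z_k), C = copy_of_T x s j0.

(* Main.v *)
Require Import Defs.
From mathcomp Require Import all_boot all_order all_algebra.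
Import GRing.Theory.
Set Implicit Arguments. Unset Strict Implicit.

Section Aux.
Variables (k d : nat) (x : point k d) (t0 : 'I_d).

Definition goodp (y : point k d) (t : 'I_d) :=
  (y t != x t) && [forall u : 'I_d, (t < u)%N ==> (y u == x u)].

Definition sdir (y : point k d) : 'I_d := odflt t0 [pick t | goodp y t].

Definition base (y : point k d) : point k d :=
  [ffun t => if t == sdir y then x t else y t].

Lemma good_uniq y t1 t2 : goodp y t1 -> goodp y t2 -> t1 = t2.
Proof.
move=> /andP[n1 /forallP f1] /andP[n2 /forallP f2].
apply/val_inj/eqP; rewrite eqn_leq; apply/andP; split; rewrite leqNgt; apply/negP=> lt.
- by move: (f2 t1); rewrite lt /= (negbTE n1).
- by move: (f1 t2); rewrite lt /= (negbTE n2).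
Qed.

Lemma good_ex y : y != x -> goodp y (sdir y).
Proof.
move=> yx; rewrite /sdir; case: pickP => [t //|H].
exfalso.
have [t ht] : exists t, y t != x t.
  apply/existsP; apply: contraR yx => /existsPn H'; apply/eqP/ffunP => t.
  by move: (H' t); rewrite negbK => /eqP.
have [m hm hmax] := @arg_maxnP 'I_d t (fun t => y t != x t) (fun t : 'I_d => val t) ht.
move: (H m); rewrite /goodp hm /=; move/negP; apply; apply/forallP => u.
apply/implyP => lt; apply: contraLR lt => hu; rewrite -leqNgt; exact: hmax.
Qed.

Lemma good_sdir y t : goodp y t -> sdir y = t.
Proof.
move=> g; have hy : y != x.
  by apply/negP=> /eqP e; move: g; rewrite e /goodp eqxx.
exact: good_uniq (@good_ex y hy) g.
Qed.
End Aux.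

Theorem proposition4 (k i d : nat) (hk : 3 <= k) (hi1 : 2 <= i) (hi2 : i <= k - 1)
  (hd : 1 <= d) (x : point k d) :
  exists P : {set {set point k d}},
    partition P [set~ x] /\ (forall C, C \in P -> is_copy_of_T C).
Proof.
pose t0 : 'I_d := Ordinal hd.
pose f := fun y : point k d => (sdir x t0 y, base x t0 y).
exists (preim_partition f [set~ x]); split; first exact: preim_partitionP.
move=> C /imsetP [y]; rewrite !inE => yx ->.
exists (base x t0 y), (sdir x t0 y), 0%R.
have gy := good_ex t0 yx.
apply/setP => z; rewrite !inE; apply/idP/idP.
- case/andP => zx /eqP [es eb].
  have gz := good_ex t0 zx.
  apply/imsetP; exists (z (sdir x t0 y) - x (sdir x t0 y))%R.
    rewrite inE subr_eq0 es; by case/andP: gz.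
  apply/ffunP => t; rewrite eb !ffunE -es.
  by case: eqP => [->|_]; rewrite ?addr0 // addrC subrK.
- case/imsetP => j; rewrite inE => j0 ->.
  set s := sdir x t0 y.
  have nx : shift_along (base x t0 y) s j != x.
    apply/negP => /eqP /ffunP /(_ s); rewrite !ffunE !eqxx.
    by move/eqP; rewrite -subr_eq0 addrC addKr (negbTE j0).
  have gz : goodp x (shift_along (base x t0 y) s j) s.
    rewrite /goodp !ffunE !eqxx -subr_eq0 addrC addKr j0 /=.
    apply/forallP => u; apply/implyP => lt.
    have us : (u == s) = false by apply/negP => /eqP e; rewrite e ltnn in lt.
    rewrite !ffunE us addr0.
    by case/andP: gy => _ /forallP /(_ u); rewrite lt.
  rewrite nx /=; apply/eqP; rewrite /f (good_sdir t0 gz); congr pair.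
  apply/ffunP => t; rewrite !ffunE (good_sdir t0 gz).
  by case: eqP => // _; rewrite addr0.
Qed.
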